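(* Let $m,n\in\mathbb{N}$, $m\ge2$, and $x_1,\dots,x_m\in(0,1)$. Suppose that $X_{(1)},\dots,X_{(m)}$ are independent random variables with $X_{(i)}\sim B(n,x_i)$ for $i=1,\dots,m$; that $S_{mn}^*\sim B(mn,\bar x)$ with $\bar x=\frac1m\sum_{i=1}^m x_i$; and that, for each $i=1,\dots,m$, $X_{(i),1},\dots,X_{(i),m}$ are independent random variables with $X_{(i),j}\sim B(n,x_i)$ for $j=1,\dots,m$. Then \begin{align*} X_{(1)}+\dots+X_{(m)}&\leqslant_{\mathrm{cx}} S_{mn}^*,\\ F_{S_{mn}^*}&\leqslant_{\mathrm{cx}}\tfrac1m\bigl[F_{X_{(1),1}+\dots+X_{(1),m}}+\dots+F_{X_{(m),1}+\dots+X_{(m),m}}\bigr],\\ F_{X_{(1)}+\dots+X_{(m)}}&\leqslant_{\mathrm{cx}}\tfrac1m\bigl[F_{X_{(1),1}+\dots+X_{(1),m}}+\dots+F_{X_{(m),1}+\dots+X_{(m),m}}\bigr]. \end{align*}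
   Context: $B(n,p)$ denotes the binomial distribution: $P(X=k)=\binom nk p^k(1-p)^{n-k}$, $k=0,\dots,n$. $F_X(t)=P(X<t)$. For distribution functions $G,H$ of probability measures with finite first moment, $G\leqslant_{\mathrm{cx}}H$ means $\int f\,dG\le\int f\,dH$ for all convex $f:\mathbb{R}\to\mathbb{R}$ for which the integrals exist; for random variables, $X\leqslant_{\mathrm{cx}}Y$ means $F_X\leqslant_{\mathrm{cx}}F_Y$. A convex combination of distribution functions is the distribution function of the corresponding mixture. *)

(* Defs.v *)
From Stdlib Require Import Reals Lra Lia List.
Import ListNotations.
Open Scope R_scope.

(* Probability mass functions of N-valued random variables, as functions nat -> R. *)

Definition binom_pmf (n : nat) (p : R) : nat -> R :=
  fun k => if Nat.leb k n then C n k * p ^ k * (1 - p) ^ (n - k) else 0.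

Definition dirac0 : nat -> R := fun k => if Nat.eqb k 0 then 1 else 0.

(* pmf of X+Y for independent X, Y with pmfs f, g (convolution) *)
Definition conv (f g : nat -> R) : nat -> R :=
  fun k => sum_f_R0 (fun i => f i * g (k - i)%nat) k.

Definition indep_sum (ps : list (nat -> R)) : nat -> R :=
  fold_right conv dirac0 ps.

Definition mixture (ps : list (nat -> R)) : nat -> R :=
  fun k => / INR (length ps) * fold_right (fun p acc => p k + acc) 0 ps.

Definition convex (f : R -> R) : Prop :=
  forall a b t, 0 <= t <= 1 -> f (t * a + (1 - t) * b) <= t * f a + (1 - t) * f b.

(* expectation of f(X) when X has pmf p supported in {0,...,N} *)
Definition expect (N : nat) (p : nat -> R) (f : R -> R) : R :=
  sum_f_R0 (fun k => p k * f (INR k)) N.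

Definition cx_le (N : nat) (p q : nat -> R) : Prop :=
  forall f : R -> R, convex f -> expect N p f <= expect N q f.

Definition sumR (l : list R) : R := fold_right Rplus 0 l.

(* Main.v *)
Require Import Defs.
From Stdlib Require Import Reals Lra Lia List Permutation FunctionalExtensionality Classical.
Import ListNotations.
Open Scope R_scope.

Fixpoint Phi (ps : list R) (h : nat -> R) : R :=
  match ps with
  | [] => h 0%nat
  | p :: ps' => (1 - p) * Phi ps' h + p * Phi ps' (fun k => h (S k))
  end.

Definition in01 (p : R) : Prop := 0 <= p <= 1.
Definition dconvex (h : nat -> R) : Prop := forall k, 2 * h (S k) <= h k + h (S (S k)).

Lemma Phi_lin : forall ps (u v : nat -> R) a b,
  Phi ps (fun k => a * u k + b * v k) = a * Phi ps u + b * Phi ps v.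
Proof.
  induction ps as [|p ps IH]; intros u v a b; simpl; [ring|].
  rewrite (IH u v a b).
  rewrite (IH (fun k => u (S k)) (fun k => v (S k)) a b). ring.
Qed.

Lemma Phi_ext : forall ps u v, (forall k, u k = v k) -> Phi ps u = Phi ps v.
Proof. intros ps u v H. f_equal. apply functional_extensionality; auto. Qed.

Lemma Phi_pos : forall ps h, Forall in01 ps -> (forall k, 0 <= h k) -> 0 <= Phi ps h.
Proof.
  induction ps as [|p ps IH]; intros h Hps Hh; simpl; auto.
  inversion Hps as [|? ? [H0 H1] Hr]; subst.
  assert (A := IH h Hr Hh). assert (B := IH (fun k => h (S k)) Hr (fun k => Hh (S k))).
  apply Rplus_le_le_0_compat; apply Rmult_le_pos; lra.
Qed.

Lemma Phi2 : forall p q ps h,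
  Phi (p :: q :: ps) h = Phi ps h + (p + q) * (Phi ps (fun k => h (S k)) - Phi ps h)
     + p * q * Phi ps (fun k => h (S (S k)) - 2 * h (S k) + h k).
Proof.
  intros. simpl.
  assert (E : Phi ps (fun k => h (S (S k)) - 2 * h (S k) + h k)
     = Phi ps (fun k => h (S (S k))) - 2 * Phi ps (fun k => h (S k)) + Phi ps h).
  { rewrite (Phi_ext ps _ (fun k => 1 * (fun k => 1 * h (S (S k)) + (-2) * h (S k)) k + 1 * h k)).
    2:{ intros; simpl; ring. }
    rewrite Phi_lin. rewrite (Phi_lin ps (fun k => h (S (S k))) (fun k => h (S k))). ring. }
  rewrite E. ring.
Qed.

Lemma Phi_perm : forall l l', Permutation l l' -> forall h, Phi l h = Phi l' h.
Proof.
  intros l l' H; induction H; intros h.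
  - reflexivity.
  - simpl. rewrite IHPermutation, (IHPermutation (fun k => h (S k))). reflexivity.
  - rewrite !Phi2. ring.
  - rewrite IHPermutation1; auto.
Qed.

Lemma Phi_app : forall l1 l2 h,
  Phi (l1 ++ l2) h = Phi l1 (fun i => Phi l2 (fun j => h (i + j)%nat)).
Proof.
  induction l1 as [|p l1 IH]; intros l2 h; simpl; [reflexivity|].
  rewrite !IH. reflexivity.
Qed.

Lemma Phi_affine : forall a b t ps h,
  Phi ((t * a + (1 - t) * b) :: ps) h = t * Phi (a :: ps) h + (1 - t) * Phi (b :: ps) h.
Proof. intros; simpl; ring. Qed.

Lemma dconvex_S : forall h, dconvex h -> dconvex (fun k => h (S k)).
Proof. intros h H k; apply H. Qed.

Lemma swap_le : forall p q p' q' ps h, Forall in01 ps -> dconvex h ->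
  p + q = p' + q' -> p * q <= p' * q' -> Phi (p :: q :: ps) h <= Phi (p' :: q' :: ps) h.
Proof.
  intros p q p' q' ps h Hps Hh Hs Hq. rewrite !Phi2. rewrite Hs.
  assert (0 <= Phi ps (fun k => h (S (S k)) - 2 * h (S k) + h k)).
  { apply Phi_pos; auto. intro k; specialize (Hh k); lra. }
  nra.
Qed.

Lemma sumR_app : forall l1 l2, sumR (l1 ++ l2) = sumR l1 + sumR l2.
Proof. induction l1; intros; simpl; [ring|]. rewrite IHl1; ring. Qed.

Lemma sumR_perm : forall l l', Permutation l l' -> sumR l = sumR l'.
Proof. intros l l' H; induction H; simpl; try lra. Qed.

Lemma sumR_bounds : forall ps, Forall in01 ps -> 0 <= sumR ps <= INR (length ps).
Proof.
  induction ps as [|p ps IH]; intros H; [simpl; lra|]. simpl sumR.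
  inversion H as [|? ? [H0 H1] Hr]; subst. specialize (IH Hr).
  change (length (p::ps)) with (S (length ps)). rewrite S_INR; lra.
Qed.

Lemma sumR_gt : forall mu ps, Forall (fun y => mu < y) ps -> ps <> [] ->
  INR (length ps) * mu < sumR ps.
Proof.
  intros mu ps H; induction H as [|y ps Hy Hr IH]; intros Hne; [congruence|].
  change (length (y::ps)) with (S (length ps)); rewrite S_INR; simpl sumR.
  destruct ps as [|z ps'].
  - simpl. lra.
  - assert (IH' := IH ltac:(congruence)). lra.
Qed.

Lemma sumR_lt : forall mu ps, Forall (fun y => y < mu) ps -> ps <> [] ->
  sumR ps < INR (length ps) * mu.
Proof.
  intros mu ps H; induction H as [|y ps Hy Hr IH]; intros Hne; [congruence|].
  change (length (y::ps)) with (S (length ps)); rewrite S_INR; simpl sumR.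
  destruct ps as [|z ps'].
  - simpl. lra.
  - assert (IH' := IH ltac:(congruence)). lra.
Qed.

Lemma perm_props : forall l l', Permutation l l' -> Forall in01 l ->
  Forall in01 l' /\ length l' = length l /\ sumR l' = sumR l.
Proof.
  intros l l' H F. split; [|split].
  - rewrite Forall_forall in *. intros y Hy. apply F. eapply Permutation_in; [apply Permutation_sym|]; eauto.
  - symmetry; apply Permutation_length; auto.
  - symmetry; apply sumR_perm; auto.
Qed.

Lemma step_exists : forall ps L mu, Forall in01 ps -> length ps = S L ->
  sumR ps = INR (S L) * mu ->
  exists rest, Forall in01 rest /\ length rest = L /\ sumR rest = INR L * mu /\
    forall h, dconvex h -> Phi ps h <= Phi (mu :: rest) h.
Proof.
  intros ps L mu F Hl Hs.
  destruct (classic (In mu ps)) as [Hin|Hnin].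
  - destruct (in_split _ _ Hin) as [l1 [l2 E]]. subst ps.
    assert (P : Permutation (l1 ++ mu :: l2) (mu :: l1 ++ l2)) by (apply Permutation_sym, Permutation_middle).
    destruct (perm_props _ _ P F) as [F' [L' S']].
    inversion F' as [|? ? _ Fr]; subst.
    exists (l1 ++ l2). split; [auto|split; [|split]].
    + simpl in L'; lia.
    + simpl in S'. rewrite S_INR in Hs. lra.
    + intros h _. rewrite (Phi_perm _ _ P). lra.
  - assert (Hne : ps <> []) by (intro; subst; discriminate).
    destruct (classic (exists a, In a ps /\ a < mu)) as [[a [Ha Ha']]|Hna].
    2:{ exfalso. assert (Forall (fun y => mu < y) ps).
        { apply Forall_forall. intros y Hy. destruct (Rtotal_order mu y) as [?|[?|?]]; auto.
          - subst; contradiction.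
          - exfalso; apply Hna; eauto. }
        pose proof (sumR_gt mu ps H Hne). rewrite Hl in H0. lra. }
    destruct (classic (exists b, In b ps /\ mu < b)) as [[b [Hb Hb']]|Hnb].
    2:{ exfalso. assert (Forall (fun y => y < mu) ps).
        { apply Forall_forall. intros y Hy. destruct (Rtotal_order mu y) as [?|[?|?]]; auto.
          - exfalso; apply Hnb; eauto.
          - subst; contradiction. }
        pose proof (sumR_lt mu ps H Hne). rewrite Hl in H0. lra. }
    destruct (in_split _ _ Ha) as [l1 [l2 E]]. subst ps.
    assert (Hb2 : In b (l1 ++ l2)).
    { apply in_app_or in Hb. destruct Hb as [Hb|[Hb|Hb]]; apply in_or_app; auto. lra. }
    destruct (in_split _ _ Hb2) as [k1 [k2 E2]].
    assert (P : Permutation (l1 ++ a :: l2) (a :: b :: k1 ++ k2)).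
    { eapply Permutation_trans; [apply Permutation_sym, Permutation_middle|].
      apply perm_skip. rewrite E2. apply Permutation_sym, Permutation_middle. }
    destruct (perm_props _ _ P F) as [F' [L' S']].
    inversion F' as [|? ? Fa Fr]; subst. inversion Fr as [|? ? Fb Fr']; subst.
    exists ((a + b - mu) :: k1 ++ k2). split; [|split; [|split]].
    + constructor; auto. unfold in01 in *; lra.
    + simpl in *; lia.
    + simpl in S' |- *. rewrite S_INR in Hs. lra.
    + intros h Hh. rewrite (Phi_perm _ _ P). apply swap_le; auto; [ring|nra].
Qed.

Lemma hoeffding : forall L ps mu h, length ps = L -> Forall in01 ps ->
  sumR ps = INR L * mu -> dconvex h -> Phi ps h <= Phi (repeat mu L) h.
Proof.
  induction L as [|L IH]; intros ps mu h Hl F Hs Hh.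
  - destruct ps; [simpl; lra|discriminate].
  - assert (Hmu : 0 <= mu <= 1).
    { pose proof (sumR_bounds ps F) as B. rewrite Hl, Hs in B. pose proof (pos_INR L).
      rewrite S_INR in B. nra. }
    destruct (step_exists ps L mu F Hl Hs) as [rest [Fr [Lr [Sr Hle]]]].
    eapply Rle_trans; [apply Hle; auto|]. simpl.
    pose proof (IH rest mu h Lr Fr Sr Hh).
    pose proof (IH rest mu _ Lr Fr Sr (dconvex_S h Hh)).
    nra.
Qed.

Lemma chord : forall (V : nat -> R) N,
  (forall j, (j + 2 <= N)%nat -> 2 * V (S j) <= V j + V (S (S j))) ->
  forall j, (j <= N)%nat -> INR N * V j <= INR j * V N + INR (N - j) * V 0%nat.
Proof.
  intros V N Hc.
  set (U := fun j => V j - V 0%nat).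
  assert (S1 : forall j, (j + 1 <= N)%nat -> INR (S j) * U j <= INR j * U (S j)).
  { induction j as [|j IH]; intros Hj.
    - unfold U; simpl; lra.
    - assert (IH' := IH ltac:(lia)). assert (C := Hc j ltac:(lia)).
      unfold U in *. rewrite !S_INR in *. pose proof (pos_INR j). nra. }
  assert (S2 : forall k j, (j + k = N)%nat -> INR N * U j <= INR j * U N).
  { induction k as [|k IH]; intros j Hj.
    - replace j with N by lia. lra.
    - assert (A1 := IH (S j) ltac:(lia)). assert (A2 := S1 j ltac:(lia)).
      rewrite S_INR in *. pose proof (pos_INR j). pose proof (pos_INR N).
      assert (INR N * (INR j + 1) * U j <= INR j * (INR j + 1) * U N) by nra.
      nra. }
  intros j Hj. assert (A := S2 (N - j)%nat j ltac:(lia)). unfold U in A.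
  rewrite minus_INR by lia. nra.
Qed.

Section Mix.
Variables (a b t : R) (h : nat -> R).
Hypothesis Hh : dconvex h.
Hypothesis Ht : 0 <= t <= 1.
Hypothesis Ha : in01 a.
Hypothesis Hb : in01 b.

Lemma Forall_repeat : forall x n, in01 x -> Forall in01 (repeat x n).
Proof. intros x n Hx; induction n; simpl; constructor; auto. Qed.


Definition W (i r : nat) := Phi (repeat a i ++ repeat b r) h.

Lemma W_conv : forall j r, 2 * W (S j) (S r) <= W j (S (S r)) + W (S (S j)) r.
Proof.
  intros j r. unfold W.
  set (R0 := repeat a j ++ repeat b r).
  assert (P1 : Permutation (repeat a j ++ repeat b (S (S r))) (b :: b :: R0)).
  { simpl. unfold R0. eapply Permutation_trans; [apply Permutation_sym, Permutation_middle|].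
    apply perm_skip. apply Permutation_sym, Permutation_middle. }
  assert (P2 : Permutation (repeat a (S j) ++ repeat b (S r)) (a :: b :: R0)).
  { simpl. apply perm_skip. unfold R0. apply Permutation_sym, Permutation_middle. }
  assert (P3 : Permutation (repeat a (S (S j)) ++ repeat b r) (a :: a :: R0)).
  { simpl. apply Permutation_refl. }
  rewrite (Phi_perm _ _ P1), (Phi_perm _ _ P2), (Phi_perm _ _ P3), !Phi2.
  set (D := Phi R0 (fun k => h (S (S k)) - 2 * h (S k) + h k)).
  assert (0 <= D).
  { apply Phi_pos. apply Forall_app; split; apply Forall_repeat; auto. intro k; specialize (Hh k); lra. }
  assert (0 <= (a - b) * (a - b) * D) by (apply Rmult_le_pos; [apply (Rle_0_sqr (a - b))|auto]).
  nra.
Qed.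

Variable N : nat.
Definition V (j : nat) := W j (N - j).

Lemma V_chord : forall j, (j <= N)%nat -> INR N * V j <= INR j * V N + INR (N - j) * V 0%nat.
Proof.
  apply chord. intros j Hj. unfold V.
  replace (N - j)%nat with (S (S (N - S (S j)))) by lia.
  replace (N - S j)%nat with (S (N - S (S j))) by lia.
  apply W_conv.
Qed.

Lemma mix_ind : forall k j r, (k + j + r = N)%nat ->
  INR N * Phi (repeat (t * a + (1 - t) * b) k ++ repeat a j ++ repeat b r) h
  <= INR N * V 0%nat + (INR j + INR k * t) * (V N - V 0%nat).
Proof.
  induction k as [|k IH]; intros j r Hk.
  - simpl. pose proof (V_chord j ltac:(lia)) as Hc. unfold V in Hc.
    replace (N - j)%nat with r in Hc by lia. unfold W in Hc.
    assert (E : INR N = INR j + INR r) by (rewrite <- plus_INR; f_equal; lia).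
    unfold V, W. rewrite Nat.sub_0_r, Nat.sub_diag in *. simpl repeat in *. simpl app in *.
    rewrite E in Hc |- *. nra.
  - set (c := t * a + (1 - t) * b). simpl repeat. cbn [app]. unfold c. rewrite Phi_affine. fold c.
    assert (P1 : Permutation (a :: repeat c k ++ repeat a j ++ repeat b r)
                             (repeat c k ++ repeat a (S j) ++ repeat b r)).
    { apply Permutation_middle. }
    assert (P2 : Permutation (b :: repeat c k ++ repeat a j ++ repeat b r)
                             (repeat c k ++ repeat a j ++ repeat b (S r))).
    { rewrite !app_assoc. apply Permutation_middle. }
    rewrite (Phi_perm _ _ P1), (Phi_perm _ _ P2).
    assert (A1 := IH (S j) r ltac:(lia)). assert (A2 := IH j (S r) ltac:(lia)).
    rewrite S_INR in *.
    assert (B1 := Rmult_le_compat_l t _ _ ltac:(lra) A1).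
    assert (B2 := Rmult_le_compat_l (1 - t) _ _ ltac:(lra) A2).
    unfold c in *. lra.
Qed.

Lemma bern_convex : Phi (repeat (t * a + (1 - t) * b) N) h
   <= t * Phi (repeat a N) h + (1 - t) * Phi (repeat b N) h.
Proof.
  destruct N as [|N'] eqn:EN.
  - simpl. lra.
  - assert (M := mix_ind N 0 0 ltac:(lia)). rewrite !app_nil_r in M.
    unfold V, W in M. rewrite Nat.sub_diag in M. simpl repeat in M. rewrite app_nil_r in M.
    cbn [app] in M. rewrite EN in M.
    assert (0 < INR (S N')) by (apply lt_0_INR; lia).
    simpl (INR 0) in M.
    apply Rmult_le_reg_l with (INR (S N')); auto. rewrite Nat.sub_0_r in M. lra.
Qed.
End Mix.

Lemma jensen : forall g : R -> R,
  (forall a b t, in01 a -> in01 b -> 0 <= t <= 1 -> g (t * a + (1 - t) * b) <= t * g a + (1 - t) * g b) ->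
  forall l, l <> [] -> Forall in01 l ->
  g (/ INR (length l) * sumR l) <= / INR (length l) * sumR (map g l).
Proof.
  intros g Hg l. induction l as [|y l IH]; intros Hne F; [congruence|].
  inversion F as [|? ? Fy Fl]; subst.
  destruct l as [|z l'].
  - simpl. replace (/ 1 * (y + 0)) with y by field. lra.
  - set (l := z :: l') in *.
    assert (IH' := IH ltac:(discriminate) Fl).
    assert (HL : 0 < INR (length l)) by (apply lt_0_INR; simpl; lia).
    assert (Bd := sumR_bounds l Fl).
    set (L := INR (length l)) in *.
    change (length (y :: l)) with (S (length l)). rewrite S_INR. fold L.
    change (sumR (y::l)) with (y + sumR l). change (map g (y::l)) with (g y :: map g l). change (sumR (g y :: map g l)) with (g y + sumR (map g l)).
    set (t := / (L + 1)).
    assert (Ht : 0 <= t <= 1).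
    { unfold t. split. left; apply Rinv_0_lt_compat; lra.
      rewrite <- Rinv_1. apply Rinv_le_contravar; lra. }
    assert (Hm : in01 (/ L * sumR l)).
    { split. apply Rmult_le_pos; [left; apply Rinv_0_lt_compat; lra| lra].
      apply Rmult_le_reg_l with L; auto. rewrite <- Rmult_assoc, Rinv_r by lra. lra. }
    replace (t * (y + sumR l)) with (t * y + (1 - t) * (/ L * sumR l))
      by (unfold t; field; lra).
    eapply Rle_trans; [apply Hg; auto|].
    replace (t * (g y + sumR (map g l))) with (t * g y + (1 - t) * (/ L * sumR (map g l)))
      by (unfold t; field; lra).
    apply Rplus_le_compat_l. apply Rmult_le_compat_l; lra.
Qed.

Definition Ex (M : nat) (p h : nat -> R) := sum_f_R0 (fun k => p k * h k) M.
Definition supp (p : nat -> R) (K : nat) := forall k, (K < k)%nat -> p k = 0.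

Lemma sum_trunc : forall F K M, (K <= M)%nat -> (forall k, (K < k <= M)%nat -> F k = 0) ->
  sum_f_R0 F M = sum_f_R0 F K.
Proof.
  intros F K M; induction M as [|M IH]; intros HKM HF.
  - replace K with 0%nat by lia. reflexivity.
  - destruct (Nat.eq_dec K (S M)) as [E|E]; [subst; reflexivity|].
    rewrite tech5, IH. rewrite (HF (S M)) by lia. ring.
    + lia.
    + intros k Hk. apply HF. lia.
Qed.

Lemma Ex_trunc : forall p K M h, supp p K -> (K <= M)%nat -> Ex M p h = Ex K p h.
Proof.
  intros p K M h Hs HKM. unfold Ex. apply sum_trunc; auto.
  intros k Hk. rewrite Hs by lia. ring.
Qed.

Lemma triangular : forall (F : nat -> nat -> R) M,
  sum_f_R0 (fun k => sum_f_R0 (fun i => F i (k - i)%nat) k) M =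
  sum_f_R0 (fun i => sum_f_R0 (fun j => F i j) (M - i)) M.
Proof.
  intros F M. induction M as [|M IH].
  - reflexivity.
  - rewrite (tech5 (fun k => sum_f_R0 (fun i => F i (k - i)%nat) k)), IH.
    rewrite (tech5 (fun i => sum_f_R0 (fun j => F i j) (S M - i))). rewrite Nat.sub_diag.
    rewrite (sum_eq (fun i => sum_f_R0 (fun j => F i j) (S M - i))
                    (fun i => sum_f_R0 (fun j => F i j) (M - i) + F i (S M - i)%nat)).
    2:{ intros i Hi. replace (S M - i)%nat with (S (M - i)) by lia. rewrite tech5.
        replace (S (M - i)) with (S M - i)%nat by lia. reflexivity. }
    rewrite plus_sum. rewrite (tech5 (fun i => F i (S M - i)%nat)). rewrite Nat.sub_diag.
    simpl (sum_f_R0 (fun j => F (S M) j) 0). ring.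
Qed.

Lemma conv_supp : forall a g A B, supp a A -> supp g B -> supp (conv a g) (A + B).
Proof.
  intros a g A B Ha Hg k Hk. unfold conv.
  rewrite (sum_eq _ (fun _ => 0)). 2:{ intros i Hi. destruct (Compare_dec.le_lt_dec i A).
    - rewrite Hg by lia; ring.
    - rewrite Ha by lia; ring. }
  clear. induction k; simpl; [ring|]. rewrite IHk; ring.
Qed.

Lemma conv_Ex : forall a g A B M h, supp a A -> supp g B -> (A + B <= M)%nat ->
  Ex M (conv a g) h = Ex A a (fun i => Ex B g (fun j => h (i + j)%nat)).
Proof.
  intros a g A B M h Ha Hg HM. unfold Ex, conv.
  rewrite (sum_eq _ (fun k => sum_f_R0 (fun i => (fun i j => a i * g j * h (i + j)%nat) i (k - i)%nat) k)).
  2:{ intros k Hk. rewrite <- (Rmult_comm (h k)), scal_sum. apply sum_eq. intros i Hi.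
      simpl. replace (i + (k - i))%nat with k by lia. ring. }
  rewrite (triangular (fun i j => a i * g j * h (i + j)%nat)). cbv beta.
  rewrite (sum_eq _ (fun i => a i * sum_f_R0 (fun j => g j * h (i + j)%nat) B)).
  - apply sum_trunc; [lia|]. intros k Hk. rewrite Ha by lia. ring.
  - intros i Hi. destruct (Compare_dec.le_lt_dec i A).
    + rewrite scal_sum. rewrite (sum_trunc _ B) by (try lia; intros; rewrite Hg by lia; ring).
      apply sum_eq; intros; ring.
    + rewrite Ha by lia. rewrite Rmult_0_l. rewrite (sum_eq _ (fun _ => 0)).
      * clear. induction (M - i)%nat; simpl; [ring|]. rewrite IHn; ring.
      * intros; rewrite Ha by lia; ring.
Qed.

Lemma C_n_0 : forall n, C n 0 = 1.
Proof. intros n. unfold C. rewrite Nat.sub_0_r. simpl. field. apply INR_fact_neq_0. Qed.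

Lemma C_n_n : forall n, C n n = 1.
Proof. intros n. unfold C. rewrite Nat.sub_diag. simpl. field. apply INR_fact_neq_0. Qed.

Lemma binom_supp : forall n p, supp (binom_pmf n p) n.
Proof. intros n p k Hk. unfold binom_pmf. destruct (Nat.leb_spec k n); [lia|reflexivity]. Qed.

Lemma binom_rec : forall n p k, (k <= S n)%nat ->
  binom_pmf (S n) p k = (1 - p) * binom_pmf n p k +
     match k with 0%nat => 0 | S k' => p * binom_pmf n p k' end.
Proof.
  intros n p k Hk. unfold binom_pmf.
  destruct k as [|k].
  - simpl Nat.leb. rewrite !C_n_0. simpl. rewrite !Nat.sub_0_r. ring.
  - destruct (Nat.leb_spec (S k) (S n)); [|lia].
    destruct (Nat.leb_spec k n); [|lia].
    destruct (Nat.leb_spec (S k) n).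
    + rewrite <- pascal by lia.
      replace (S n - S k)%nat with (S (n - S k)) by lia.
      replace (n - k)%nat with (S (n - S k)) by lia. simpl. ring.
    + assert (k = n) by lia. subst k. rewrite !C_n_n. rewrite Nat.sub_diag. rewrite Nat.sub_diag. simpl. ring.
Qed.

Lemma binom_Ex_rec : forall n p h,
  Ex (S n) (binom_pmf (S n) p) h = (1 - p) * Ex n (binom_pmf n p) h
      + p * Ex n (binom_pmf n p) (fun k => h (S k)).
Proof.
  intros n p h. unfold Ex.
  rewrite (sum_eq _ (fun k => (1 - p) * binom_pmf n p k * h k +
       (match k with 0%nat => 0 | S k' => p * binom_pmf n p k' end) * h k)).
  2:{ intros i Hi. rewrite binom_rec by lia. ring. }
  rewrite plus_sum. rewrite tech5. rewrite (binom_supp n p (S n)) by lia.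
  rewrite (decomp_sum (fun k => (match k with 0%nat => 0 | S k' => p * binom_pmf n p k' end) * h k)) by lia. simpl pred.
  rewrite !scal_sum. f_equal.
  - rewrite Rmult_0_r, Rmult_0_l, Rplus_0_r. apply sum_eq; intros; ring.
  - rewrite Rmult_0_l, Rplus_0_l. apply sum_eq; intros; ring.
Qed.

Lemma binom_Phi : forall n p h, Ex n (binom_pmf n p) h = Phi (repeat p n) h.
Proof.
  induction n as [|n IH]; intros p h.
  - unfold Ex, binom_pmf. simpl. rewrite C_n_0. ring.
  - rewrite binom_Ex_rec, !IH. reflexivity.
Qed.

Lemma dirac0_supp : supp dirac0 0.
Proof. intros k Hk. unfold dirac0. destruct k; [lia|reflexivity]. Qed.

Lemma indep_supp : forall n qs, supp (indep_sum (map (binom_pmf n) qs)) (n * length qs).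
Proof.
  intros n qs; induction qs as [|q qs IH]; simpl.
  - rewrite Nat.mul_0_r. apply dirac0_supp.
  - replace (n * S (length qs))%nat with (n + n * length qs)%nat by lia.
    apply conv_supp; auto. apply binom_supp.
Qed.

Lemma indep_Phi : forall n qs M h, (n * length qs <= M)%nat ->
  Ex M (indep_sum (map (binom_pmf n) qs)) h = Phi (concat (map (fun q => repeat q n) qs)) h.
Proof.
  intros n qs; induction qs as [|q qs IH]; intros M h HM.
  - simpl. rewrite (Ex_trunc _ 0) by (auto using dirac0_supp; lia).
    unfold Ex, dirac0. simpl. ring.
  - simpl. rewrite (conv_Ex _ _ n (n * length qs)); [| apply binom_supp | apply indep_supp | simpl in HM; lia].
    rewrite Phi_app. rewrite <- binom_Phi. f_equal.
    apply functional_extensionality. intro i. apply IH. lia.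
Qed.

Lemma mixture_Ex : forall L M h,
  Ex M (mixture L) h = / INR (length L) * sumR (map (fun p => Ex M p h) L).
Proof.
  intros L M h. unfold Ex, mixture.
  rewrite (sum_eq _ (fun k => / INR (length L) * (fold_right (fun p acc => p k + acc) 0 L * h k)))
    by (intros; ring).
  rewrite <- (sum_eq (fun k => (fold_right (fun p acc => p k + acc) 0 L * h k) * / INR (length L))) by (intros; ring).
  rewrite <- scal_sum. f_equal.
  induction L as [|p L IH]; simpl.
  - clear. induction M; simpl; [ring|]. rewrite IHM; ring.
  - rewrite <- IH. rewrite <- plus_sum. apply sum_eq; intros; ring.
Qed.

Lemma concat_repeat : forall (y : R) n m, concat (map (fun q => repeat q n) (repeat y m)) = repeat y (m * n).
Proof.
  intros y n m; induction m; simpl; auto. rewrite IHm, repeat_app. reflexivity.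
Qed.

Lemma concat_len : forall n (qs : list R), length (concat (map (fun q => repeat q n) qs)) = (n * length qs)%nat.
Proof. intros n qs; induction qs; simpl; [lia|]. rewrite length_app, repeat_length, IHqs. lia. Qed.

Lemma sumR_repeat : forall y n, sumR (repeat y n) = INR n * y.
Proof. intros y n; induction n; simpl repeat; [simpl; ring|]. simpl sumR. rewrite IHn, S_INR. ring. Qed.

Lemma concat_sum : forall n qs, sumR (concat (map (fun q => repeat q n) qs)) = INR n * sumR qs.
Proof. intros n qs; induction qs; simpl; [ring|]. rewrite sumR_app, IHqs, sumR_repeat. ring. Qed.

Lemma concat_in01 : forall n qs, Forall in01 qs -> Forall in01 (concat (map (fun q => repeat q n) qs)).
Proof.
  intros n qs H; induction H; simpl; auto. apply Forall_app; split; auto. apply Forall_repeat; auto.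
Qed.

Lemma convex_dconvex : forall f, convex f -> dconvex (fun k => f (INR k)).
Proof.
  intros f Hf k. cbv beta.
  assert (H := Hf (INR k) (INR (S (S k))) (/2) ltac:(lra)).
  replace (/ 2 * INR k + (1 - / 2) * INR (S (S k))) with (INR (S k)) in H
    by (rewrite !S_INR; field).
  lra.
Qed.

Theorem proposition3 (m n : nat) (x : nat -> R)
  (hm : (2 <= m)%nat)
  (hx : forall i, (1 <= i <= m)%nat -> 0 < x i < 1) :
  let N := (m * n)%nat in
  let xbar := / INR m * sumR (map x (seq 1 m)) in
  let S_indep := indep_sum (map (fun i => binom_pmf n (x i)) (seq 1 m)) in
  let S_star := binom_pmf (m * n) xbar in
  let Mix := mixture (map (fun i => indep_sum (repeat (binom_pmf n (x i)) m)) (seq 1 m)) in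
  cx_le N S_indep S_star /\ cx_le N S_star Mix /\ cx_le N S_indep Mix.
Proof.
  intros N xbar S_indep S_star Mix.
  assert (Fx : Forall in01 (map x (seq 1 m))).
  { apply Forall_forall. intros y Hy. apply in_map_iff in Hy. destruct Hy as [i [<- Hi]].
    apply in_seq in Hi. specialize (hx i ltac:(lia)). unfold in01; lra. }
  assert (Lx : length (map x (seq 1 m)) = m) by (rewrite length_map, length_seq; reflexivity).
  assert (Hm0 : 0 < INR m) by (apply lt_0_INR; lia).
  assert (E1 : forall h, expect N S_indep (fun r => h r) = Ex N S_indep (fun k => h (INR k))) by reflexivity.
  assert (X1 : forall h, Ex N S_indep h = Phi (concat (map (fun q => repeat q n) (map x (seq 1 m)))) h).
  { intros h. unfold S_indep.
    replace (map (fun i => binom_pmf n (x i)) (seq 1 m)) with (map (binom_pmf n) (map x (seq 1 m)))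
      by (rewrite map_map; reflexivity).
    apply indep_Phi. rewrite Lx. unfold N; lia. }
  assert (X2 : forall h, Ex N S_star h = Phi (repeat xbar N) h).
  { intros h. apply binom_Phi. }
  assert (X3 : forall h, Ex N Mix h = / INR m * sumR (map (fun q => Phi (repeat q N) h) (map x (seq 1 m)))).
  { intros h. unfold Mix. rewrite mixture_Ex. rewrite length_map, length_seq. f_equal.
    rewrite !map_map. f_equal. apply map_ext. intros i.
    rewrite <- map_repeat. rewrite indep_Phi by (rewrite repeat_length; unfold N; lia).
    rewrite concat_repeat. reflexivity. }
  assert (I1 : cx_le N S_indep S_star).
  { intros f Hf. unfold expect. fold (Ex N S_indep (fun k => f (INR k))).
    fold (Ex N S_star (fun k => f (INR k))). rewrite X1, X2.
    apply hoeffding.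
    - rewrite concat_len, Lx. unfold N; lia.
    - apply concat_in01; auto.
    - rewrite concat_sum. unfold xbar, N. rewrite mult_INR. field. lra.
    - apply convex_dconvex; auto. }
  assert (I2 : cx_le N S_star Mix).
  { intros f Hf. unfold expect. fold (Ex N S_star (fun k => f (INR k))).
    fold (Ex N Mix (fun k => f (INR k))). rewrite X2, X3.
    unfold xbar. rewrite <- Lx at 1 3.
    apply (jensen (fun q => Phi (repeat q N) (fun k => f (INR k)))).
    - intros a b t Ha Hb Ht. apply bern_convex; auto. apply convex_dconvex; auto.
    - intro E. rewrite E in Lx. simpl in Lx. lia.
    - auto. }
  split; [auto|split; [auto|]].
  intros f Hf. eapply Rle_trans; [apply I1|apply I2]; auto.
Qed.
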